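(* Let $X$ be a complete CAT(0) space, $T_n:X\to X$ for every $n\in\mathbb{N}$, and $(\gamma_n)$ a sequence of positive reals with $\sum_{n=0}^\infty\gamma_n^2=\infty$. Assume that $(T_n)$ is jointly $(P_2)$ with respect to $(\gamma_n)$ (in particular, this holds if $(T_n)$ is jointly firmly nonexpansive with respect to $(\gamma_n)$) and that $F:=\bigcap_{n\in\mathbb{N}}Fix(T_n)\neq\emptyset$. Let $x\in X$, $x_0:=x$, $x_{n+1}:=T_nx_n$ for all $n$. Then $(x_n)$ $\Delta$-converges to a point of $F$.
   Context: A geodesic space $(X,d)$ is CAT(0) if for all $z\in X$, all geodesics $\gamma:[a,b]\to X$ and all $t\in[0,1]$, $d^2(z,\gamma((1-t)a+tb))\le(1-t)d^2(z,\gamma(a))+td^2(z,\gamma(b))-t(1-t)d^2(\gamma(a),\gamma(b))$. CAT(0) spaces are uniquely geodesic; $(1-t)x+ty$ denotes the point at distance $t\,d(x,y)$ from $x$ on the geodesic from $x$ to $y$. $(T_n)$ is jointly firmly nonexpansive w.r.t. $(\gamma_n)$ if for all $n,m$, $x,y\in X$, $\alpha,\beta\in[0,1]$ with $(1-\alpha)\gamma_n=(1-\beta)\gamma_m$: $d(T_nx,T_my)\le d((1-\alpha)x+\alpha T_nx,(1-\beta)y+\beta T_my)$. $(T_n)$ is jointly $(P_2)$ w.r.t. $(\gamma_n)$ if for all $n,m$ and $x,y\in X$: $\frac1{\gamma_m}\big(d^2(T_nx,T_my)+d^2(y,T_my)-d^2(y,T_nx)\big)\le\frac1{\gamma_n}\big(d^2(x,T_my)-d^2(x,T_nx)-d^2(T_nx,T_my)\big)$.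 $Fix(T)$ is the fixed point set. For a bounded sequence $(u_n)$, an asymptotic center is a minimizer over $X$ of $y\mapsto\limsup_n d(y,u_n)$; a bounded sequence $\Delta$-converges to $x$ if every subsequence has $x$ as its unique asymptotic center. *)

(* Defs.v *)
From Stdlib Require Import Reals.
From Coquelicot Require Import Coquelicot.
Open Scope R_scope.

Section CAT0.
Context {X : Type} (d : X -> X -> R).

Definition is_metric : Prop :=
  (forall x y, 0 <= d x y) /\
  (forall x y, d x y = 0 <-> x = y) /\
  (forall x y, d x y = d y x) /\
  (forall x y z, d x z <= d x y + d y z).

Definition is_geodesic (g : R -> X) (a b : R) : Prop :=
  a <= b /\
  forall s t, a <= s <= b -> a <= t <= b -> d (g s) (g t) = Rabs (s - t).

Definition geodesic_space : Prop :=
  forall x y, exists g : R -> X,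
    is_geodesic g 0 (d x y) /\ g 0 = x /\ g (d x y) = y.

Definition CAT0_ineq : Prop :=
  forall (z : X) (g : R -> X) (a b : R), is_geodesic g a b ->
  forall t, 0 <= t <= 1 ->
    (d z (g ((1 - t) * a + t * b)))^2 <=
      (1 - t) * (d z (g a))^2 + t * (d z (g b))^2
      - t * (1 - t) * (d (g a) (g b))^2.

Definition cauchy_seq (u : nat -> X) : Prop :=
  forall eps, 0 < eps -> exists N, forall m n, (N <= m)%nat -> (N <= n)%nat ->
    d (u m) (u n) < eps.

Definition converges_to (u : nat -> X) (l : X) : Prop :=
  forall eps, 0 < eps -> exists N, forall n, (N <= n)%nat -> d (u n) l < eps.

Definition complete : Prop :=
  forall u, cauchy_seq u -> exists l, converges_to u l.

Definition complete_CAT0 : Prop :=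
  is_metric /\ geodesic_space /\ CAT0_ineq /\ complete.

Definition bounded_seq (u : nat -> X) : Prop :=
  exists (c : X) (M : R), forall n, d c (u n) <= M.

Definition asymptotic_radius_at (u : nat -> X) (y : X) : Rbar :=
  LimSup_seq (fun n => d y (u n)).

Definition is_asymptotic_center (u : nat -> X) (x : X) : Prop :=
  forall y, Rbar_le (asymptotic_radius_at u x) (asymptotic_radius_at u y).

Definition unique_asymptotic_center (u : nat -> X) (x : X) : Prop :=
  is_asymptotic_center u x /\ forall y, is_asymptotic_center u y -> y = x.

Definition Delta_converges (u : nat -> X) (x : X) : Prop :=
  bounded_seq u /\
  forall phi : nat -> nat, (forall n, (phi n < phi (S n))%nat) ->
    unique_asymptotic_center (fun n => u (phi n)) x.

Definition jointly_P2 (T : nat -> X -> X) (gamma : nat -> R) : Prop :=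
  forall n m x y,
    / gamma m * ((d (T n x) (T m y))^2 + (d y (T m y))^2 - (d y (T n x))^2) <=
    / gamma n * ((d x (T m y))^2 - (d x (T n x))^2 - (d (T n x) (T m y))^2).

End CAT0.

Fixpoint orbit {X : Type} (T : nat -> X -> X) (x : X) (n : nat) : X :=
  match n with
  | O => x
  | S k => T k (orbit T x k)
  end.

(* Main.v *)
Require Import Defs.
From Stdlib Require Import Reals Lra Psatz ClassicalEpsilon Classical.
From Coquelicot Require Import Coquelicot.
Open Scope R_scope.

Lemma le_eps (a b : R) : (forall e, 0 < e -> a <= b + e) -> a <= b.
Proof.
  intros H. destruct (Rle_or_lt a b) as [h|h]; auto.
  specialize (H ((a-b)/2)). lra.
Qed.

Lemma small_K (A K : R) : (forall e, 0 < e -> e <= 1 -> A <= e * K) -> A <= 0.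
Proof.
  intros H. destruct (Rle_or_lt A 0) as [h|h]; auto. exfalso.
  assert (hq : 0 < 2 * (Rabs K + 1)) by (pose proof (Rabs_pos K); lra).
  assert (h1 : 0 < A / (2 * (Rabs K + 1))) by (apply Rdiv_lt_0_compat; lra).
  set (e := Rmin 1 (A / (2 * (Rabs K + 1)))).
  assert (he0 : 0 < e) by (unfold e; apply Rmin_glb_lt; lra).
  assert (he1 : e <= 1) by apply Rmin_l.
  assert (he2 : e <= A / (2 * (Rabs K + 1))) by apply Rmin_r.
  assert (he3 : e * (2 * (Rabs K + 1)) <= A).
  { apply Rmult_le_compat_r with (r := 2 * (Rabs K + 1)) in he2; [|lra].
    unfold Rdiv in he2. rewrite Rmult_assoc, Rinv_l in he2; lra. }
  assert (hk : e * K <= e * Rabs K) by (apply Rmult_le_compat_l; [lra| apply Rle_abs]).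
  specialize (H e he0 he1). pose proof (Rabs_pos K). nra.
Qed.

Lemma LS_fr (s : nat -> R) l e : is_LimSup_seq s (Finite l) -> 0 < e ->
  forall N, exists n, (N <= n)%nat /\ l - e < s n.
Proof. intros H he. exact (proj1 (H (mkposreal e he))). Qed.

Lemma LS_ev (s : nat -> R) l e : is_LimSup_seq s (Finite l) -> 0 < e ->
  exists N, forall n, (N <= n)%nat -> s n < l + e.
Proof. intros H he. exact (proj2 (H (mkposreal e he))). Qed.



Lemma LS_nonneg (s : nat -> R) l : (forall n, 0 <= s n) -> is_LimSup_seq s (Finite l) -> 0 <= l.
Proof.
  intros Hs H. apply le_eps. intros e he. destruct (LS_ev s l e H he) as [N HN].
  specialize (HN N (le_n _)). specialize (Hs N). lra.
Qed.

Lemma lin_cmp (a b c : nat -> R) la lb lc al be k :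
  is_LimSup_seq a (Finite la) -> is_LimSup_seq b (Finite lb) -> is_LimSup_seq c (Finite lc) ->
  0 <= al -> 0 <= be ->
  (forall e, 0 < e -> exists N, forall n, (N <= n)%nat -> a n <= al * b n + be * c n + k + e) ->
  la <= al * lb + be * lc + k.
Proof.
  intros Ha Hb Hc Hal Hbe H.
  cut (la - (al * lb + be * lc + k) <= 0). lra.
  apply (small_K _ (2 + al + be)). intros e he he1.
  destruct (LS_ev b lb e Hb he) as [Nb HNb].
  destruct (LS_ev c lc e Hc he) as [Nc HNc].
  destruct (H e he) as [Nh HNh].
  destruct (LS_fr a la e Ha he (Nb + Nc + Nh)) as [n [Hn Hlt]].
  assert (h1 : b n < lb + e) by (apply HNb; lia).
  assert (h2 : c n < lc + e) by (apply HNc; lia).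
  assert (h3 := HNh n ltac:(lia)).
  assert (h4 : al * b n <= al * (lb + e)) by (apply Rmult_le_compat_l; lra).
  assert (h5 : be * c n <= be * (lc + e)) by (apply Rmult_le_compat_l; lra).
  nra.
Qed.

Lemma LS_sq (s : nat -> R) l : (forall n, 0 <= s n) -> is_LimSup_seq s (Finite l) ->
  is_LimSup_seq (fun n => s n ^ 2) (Finite (l ^ 2)).
Proof.
  intros Hs H. pose proof (LS_nonneg s l Hs H) as hl.
  intros [e he]; simpl.
  assert (hq : 0 < 2 * l + 2) by lra.
  assert (h1 : 0 < e / (2 * l + 2)) by (apply Rdiv_lt_0_compat; lra).
  set (dl := Rmin 1 (e / (2 * l + 2))).
  assert (hd0 : 0 < dl) by (unfold dl; apply Rmin_glb_lt; lra).
  assert (hd1 : dl <= 1) by apply Rmin_l.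
  assert (hd2 : dl <= e / (2 * l + 2)) by apply Rmin_r.
  assert (hd3 : dl * (2 * l + 2) <= e).
  { apply Rmult_le_compat_r with (r := 2 * l + 2) in hd2; [|lra].
    unfold Rdiv in hd2. rewrite Rmult_assoc, Rinv_l in hd2; lra. }
  split.
  - intros N. destruct (LS_fr s l dl H hd0 N) as [n [Hn Hlt]]. exists n. split; auto.
    specialize (Hs n).
    destruct (Rle_or_lt (l - dl) 0) as [hc|hc].
    + nra.
    + assert ((l - dl) * (l - dl) <= s n * s n) by (apply Rmult_le_compat; lra). nra.
  - destruct (LS_ev s l dl H hd0) as [N HN]. exists N. intros n Hn.
    specialize (HN n Hn). specialize (Hs n).
    assert (s n * s n <= (l + dl) * (l + dl)) by (apply Rmult_le_compat; lra). nra.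
Qed.


Lemma m_pos {X} (d : X -> X -> R) : is_metric d -> forall x y, 0 <= d x y.
Proof. intros [h _]; exact h. Qed.
Lemma m_eq {X} (d : X -> X -> R) : is_metric d -> forall x y, d x y = 0 -> x = y.
Proof. intros [_ [h _]] x y; apply h. Qed.
Lemma m_zero {X} (d : X -> X -> R) : is_metric d -> forall x, d x x = 0.
Proof. intros [_ [h _]] x; apply h; reflexivity. Qed.
Lemma m_sym {X} (d : X -> X -> R) : is_metric d -> forall x y, d x y = d y x.
Proof. intros [_ [_ [h _]]]; exact h. Qed.
Lemma m_tri {X} (d : X -> X -> R) : is_metric d -> forall x y z, d x z <= d x y + d y z.
Proof. intros [_ [_ [_ h]]]; exact h. Qed.

Definition rad {X} (d : X -> X -> R) (u : nat -> X) (y : X) : R :=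
  real (LimSup_seq (fun n => d y (u n))).

Lemma rad_eq {X} (d : X -> X -> R) u y l :
  is_LimSup_seq (fun n => d y (u n)) (Finite l) -> rad d u y = l.
Proof. intros H. unfold rad. rewrite (is_LimSup_seq_unique _ _ H). reflexivity. Qed.

Lemma rad_is {X} (d : X -> X -> R) u y : is_metric d -> bounded_seq d u ->
  is_LimSup_seq (fun n => d y (u n)) (Finite (rad d u y)).
Proof.
  intros Hm [c [M HM]].
  destruct (ex_LimSup_seq (fun n => d y (u n))) as [l Hl].
  assert (Hb : forall n, d y (u n) <= d y c + M).
  { intros n. pose proof (m_tri d Hm y c (u n)). specialize (HM n). lra. }
  destruct l as [l| |].
  - rewrite (rad_eq d u y l Hl). exact Hl.
  - exfalso. destruct (Hl (d y c + M + 1) 0%nat) as [n [_ Hn]]. specialize (Hb n). lra.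
  - exfalso. destruct (Hl 0) as [N HN]. specialize (HN N (le_n _)).
    pose proof (m_pos d Hm y (u N)). lra.
Qed.

Lemma rad_LS {X} (d : X -> X -> R) u y : is_metric d -> bounded_seq d u ->
  LimSup_seq (fun n => d y (u n)) = Finite (rad d u y).
Proof. intros Hm Hb. apply is_LimSup_seq_unique, rad_is; auto. Qed.

Lemma rad_nonneg {X} (d : X -> X -> R) u y : is_metric d -> bounded_seq d u -> 0 <= rad d u y.
Proof. intros Hm Hb. apply (LS_nonneg (fun n => d y (u n))). intros; apply (m_pos d Hm). apply rad_is; auto. Qed.

Lemma rad_sq {X} (d : X -> X -> R) u y : is_metric d -> bounded_seq d u ->
  is_LimSup_seq (fun n => d y (u n) ^ 2) (Finite (rad d u y ^ 2)).
Proof. intros Hm Hb. apply (LS_sq (fun n => d y (u n))). intros; apply (m_pos d Hm). apply rad_is; auto. Qed.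

Lemma rad_lip {X} (d : X -> X -> R) u y y' : is_metric d -> bounded_seq d u ->
  rad d u y <= rad d u y' + d y y'.
Proof.
  intros Hm Hb.
  pose proof (lin_cmp (fun n => d y (u n)) (fun n => d y' (u n)) (fun n => d y' (u n))
    (rad d u y) (rad d u y') (rad d u y') 1 0 (d y y') (rad_is d u y Hm Hb) (rad_is d u y' Hm Hb)
    (rad_is d u y' Hm Hb) ltac:(lra) ltac:(lra)) as H.
  assert (H' : forall e, 0 < e -> exists N, forall n, (N <= n)%nat ->
     d y (u n) <= 1 * d y' (u n) + 0 * d y' (u n) + d y y' + e).
  { intros e he. exists 0%nat. intros n _. pose proof (m_tri d Hm y y' (u n)). lra. }
  specialize (H H'). lra.
Qed.

Lemma mid_ex {X} (d : X -> X -> R) : complete_CAT0 d -> forall y z, exists m, forall w,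
  d w m ^ 2 <= / 2 * d w y ^ 2 + / 2 * d w z ^ 2 - / 4 * d y z ^ 2.
Proof.
  intros [Hm [Hg [Hc _]]] y z.
  destruct (Hg y z) as [g [Hgeo [Hg0 Hg1]]].
  exists (g ((1 - /2) * 0 + /2 * d y z)). intros w.
  assert (ht : 0 <= /2 <= 1) by lra.
  pose proof (Hc w g 0 (d y z) Hgeo (/2) ht) as H.
  rewrite Hg0, Hg1 in H. lra.
Qed.

Lemma rad_mid {X} (d : X -> X -> R) u y z m : is_metric d -> bounded_seq d u ->
  (forall w, d w m ^ 2 <= / 2 * d w y ^ 2 + / 2 * d w z ^ 2 - / 4 * d y z ^ 2) ->
  rad d u m ^ 2 <= / 2 * rad d u y ^ 2 + / 2 * rad d u z ^ 2 - / 4 * d y z ^ 2.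
Proof.
  intros Hm Hb Hmid.
  apply (lin_cmp (fun n => d m (u n) ^ 2) (fun n => d y (u n) ^ 2) (fun n => d z (u n) ^ 2));
    try apply rad_sq; auto; try lra.
  intros e he. exists 0%nat. intros n _.
  specialize (Hmid (u n)). rewrite !(m_sym d Hm (u n)) in Hmid. lra.
Qed.

Lemma center_uniq {X} (d : X -> X -> R) u p q : complete_CAT0 d -> bounded_seq d u ->
  (forall y, rad d u p <= rad d u y) -> (forall y, rad d u q <= rad d u y) -> p = q.
Proof.
  intros Hc Hb Hp Hq. pose proof (proj1 Hc) as Hm.
  destruct (mid_ex d Hc p q) as [m Hmid].
  pose proof (rad_mid d u p q m Hm Hb Hmid) as H.
  specialize (Hp m). specialize (Hq m).
  pose proof (rad_nonneg d u p Hm Hb). pose proof (rad_nonneg d u q Hm Hb).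
  pose proof (m_pos d Hm p q).
  assert (rad d u p * rad d u p <= rad d u m * rad d u m) by (apply Rmult_le_compat; lra).
  assert (rad d u q * rad d u q <= rad d u m * rad d u m) by (apply Rmult_le_compat; lra).
  apply (m_eq d Hm). nra.
Qed.

Lemma center_ex {X} (d : X -> X -> R) u : complete_CAT0 d -> bounded_seq d u ->
  exists p, forall y, rad d u p <= rad d u y.
Proof.
  intros Hc Hb. pose proof (proj1 Hc) as Hm. pose proof (proj2 (proj2 (proj2 Hc))) as Hcomp.
  set (E := fun t => exists y, t = - rad d u y).
  assert (HE1 : bound E).
  { exists 0. intros t [y ->]. pose proof (rad_nonneg d u y Hm Hb). lra. }
  assert (HE2 : exists t, E t).
  { destruct Hb as [c _]. exists (- rad d u c). exists c. reflexivity. }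
  destruct (completeness E HE1 HE2) as [s [Hs1 Hs2]].
  set (R0 := - s).
  assert (HR1 : forall y, R0 <= rad d u y).
  { intros y. assert (E (- rad d u y)) by (exists y; reflexivity). specialize (Hs1 _ H). unfold R0. lra. }
  assert (HR2 : forall dl, 0 < dl -> exists y, rad d u y < R0 + dl).
  { intros dl hdl. apply NNPP. intros Hn.
    assert (is_upper_bound E (s - dl)).
    { intros t [y ->]. destruct (Rle_or_lt (- rad d u y) (s - dl)) as [h|h]; auto.
      exfalso. apply Hn. exists y. unfold R0. lra. }
    specialize (Hs2 _ H). lra. }
  assert (HR0 : 0 <= R0).
  { destruct (HR2 1 ltac:(lra)) as [y _]. 
    apply le_eps. intros e he. destruct (HR2 e he) as [y' Hy']. pose proof (rad_nonneg d u y' Hm Hb). lra. }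
  assert (Hseq : forall k : nat, {y : X | rad d u y < R0 + / INR (S k)}).
  { intros k. apply constructive_indefinite_description. apply HR2.
    apply Rinv_0_lt_compat. apply lt_0_INR. lia. }
  set (ys := fun k => proj1_sig (Hseq k)).
  assert (Hys : forall k, rad d u (ys k) < R0 + / INR (S k)).
  { intros k. unfold ys. exact (proj2_sig (Hseq k)). }
  assert (Hinv : forall N k, (0 < N)%nat -> (N <= k)%nat -> / INR (S k) < / INR N).
  { intros N k hN hk. apply Rinv_lt_contravar.
    - apply Rmult_lt_0_compat; apply lt_0_INR; lia.
    - apply lt_INR. lia. }
  assert (Hcau : cauchy_seq d ys).
  { intros eps heps.
    set (dl := Rmin 1 (eps ^ 2 / (8 * R0 + 8))).
    assert (h8 : 0 < 8 * R0 + 8) by lra.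
    assert (hd0 : 0 < dl) by (unfold dl; apply Rmin_glb_lt; [lra| apply Rdiv_lt_0_compat; nra]).
    assert (hd1 : dl <= 1) by apply Rmin_l.
    assert (hd2 : dl <= eps ^ 2 / (8 * R0 + 8)) by apply Rmin_r.
    assert (hd3 : dl * (8 * R0 + 8) <= eps ^ 2).
    { apply Rmult_le_compat_r with (r := 8 * R0 + 8) in hd2; [|lra].
      unfold Rdiv in hd2. rewrite Rmult_assoc, Rinv_l in hd2; lra. }
    destruct (archimed_cor1 dl hd0) as [N [HN1 HN2]].
    exists N. intros j k hj hk.
    assert (hj' : rad d u (ys j) < R0 + dl) by (pose proof (Hys j); pose proof (Hinv N j HN2 hj); lra).
    assert (hk' : rad d u (ys k) < R0 + dl) by (pose proof (Hys k); pose proof (Hinv N k HN2 hk); lra).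
    destruct (mid_ex d Hc (ys j) (ys k)) as [m Hmid].
    pose proof (rad_mid d u _ _ m Hm Hb Hmid) as H.
    pose proof (HR1 m) as Hm1.
    pose proof (rad_nonneg d u (ys j) Hm Hb). pose proof (rad_nonneg d u (ys k) Hm Hb).
    pose proof (m_pos d Hm (ys j) (ys k)).
    assert (R0 * R0 <= rad d u m * rad d u m) by (apply Rmult_le_compat; lra).
    assert (rad d u (ys j) * rad d u (ys j) <= (R0 + dl) * (R0 + dl)) by (apply Rmult_le_compat; lra).
    assert (rad d u (ys k) * rad d u (ys k) <= (R0 + dl) * (R0 + dl)) by (apply Rmult_le_compat; lra).
    assert (Hd2 : d (ys j) (ys k) ^ 2 < eps ^ 2) by nra.
    nra. }
  destruct (Hcomp ys Hcau) as [p Hp].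
  exists p. intros y. apply Rle_trans with R0; [|apply HR1].
  apply le_eps. intros e he.
  destruct (Hp (e / 2) ltac:(lra)) as [N1 HN1].
  destruct (archimed_cor1 (e / 2) ltac:(lra)) as [N2 [HN2 HN2']].
  set (k := (N1 + N2)%nat).
  pose proof (HN1 k ltac:(unfold k; lia)) as h1.
  pose proof (Hys k) as h2. pose proof (Hinv N2 k HN2' ltac:(unfold k; lia)) as h3.
  pose proof (rad_lip d u p (ys k) Hm Hb) as h4.
  rewrite (m_sym d Hm p (ys k)) in h4. lra.
Qed.

Lemma sq_le (u v : R) : 0 <= u -> u <= v -> u ^ 2 <= v ^ 2.
Proof. intros h1 h2. nra. Qed.

Lemma iac_iff {X} (d : X -> X -> R) u y : is_metric d -> bounded_seq d u ->
  (is_asymptotic_center d u y <-> forall y', rad d u y <= rad d u y').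
Proof.
  intros Hm Hb. unfold is_asymptotic_center, asymptotic_radius_at.
  split; intros H y'; specialize (H y'); rewrite !(rad_LS d u _ Hm Hb) in *; simpl in *; exact H.
Qed.

Theorem theorem3p13 (X : Type) (d : X -> X -> R) (T : nat -> X -> X)
  (gamma : nat -> R) :
  complete_CAT0 d ->
  (forall n, 0 < gamma n) ->
  cv_infty (fun N => sum_f_R0 (fun n => (gamma n)^2) N) ->
  jointly_P2 d T gamma ->
  (exists p : X, forall n, T n p = p) ->
  forall x : X, exists p : X, (forall n, T n p = p) /\
    Delta_converges d (orbit T x) p.
Proof.
  intros Hc Hg Hinf HP2 [p0 Hp0] x.
  pose proof (proj1 Hc) as Hm.
  set (xs := orbit T x).
  assert (Hxs : forall n, xs (S n) = T n (xs n)) by reflexivity.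
  assert (Hig : forall n, 0 < / gamma n) by (intros; apply Rinv_0_lt_compat; auto).
  assert (Hfej : forall q, (forall n, T n q = q) -> forall n,
     d (xs (S n)) q ^ 2 + d (xs n) (xs (S n)) ^ 2 <= d (xs n) q ^ 2).
  { intros q Hq n. pose proof (HP2 n 0%nat (xs n) q) as H.
    rewrite Hq, (m_zero d Hm q), (m_sym d Hm q (T n (xs n))), <- Hxs in H.
    specialize (Hig n).
    assert (0 <= / gamma n * (d (xs n) q ^ 2 - d (xs n) (xs (S n)) ^ 2 - d (xs (S n)) q ^ 2)) by lra.
    nra. }
  assert (Hstep : forall q, (forall n, T n q = q) -> forall n, d q (xs (S n)) <= d q (xs n)).
  { intros q Hq n. specialize (Hfej q Hq n). rewrite !(m_sym d Hm q).
    pose proof (m_pos d Hm (xs (S n)) q). pose proof (m_pos d Hm (xs n) q).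
    pose proof (m_pos d Hm (xs n) (xs (S n))). nra. }
  assert (Hmono : forall q, (forall n, T n q = q) -> forall n k, (n <= k)%nat -> d q (xs k) <= d q (xs n)).
  { intros q Hq n k Hnk. induction Hnk; [lra|]. pose proof (Hstep q Hq m). lra. }
  assert (Hbx : forall phi : nat -> nat, bounded_seq d (fun k => xs (phi k))).
  { intros phi. exists p0, (d p0 x). intros k. apply (Hmono p0 Hp0 0%nat). lia. }
  set (a := fun n => d (xs n) (xs (S n))).
  assert (Ha0 : forall n, 0 <= a n) by (intros; apply (m_pos d Hm)).
  assert (Hsum : forall n, sum_f_R0 (fun k => a k ^ 2) n + d (xs (S n)) p0 ^ 2 <= d x p0 ^ 2).
  { induction n.
    - cbn [sum_f_R0]. pose proof (Hfej p0 Hp0 0%nat) as H. change (xs 0%nat) with x in H. change (a 0%nat) with (d x (xs 1%nat)). lra.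
    - rewrite tech5. pose proof (Hfej p0 Hp0 (S n)). change (a (S n)) with (d (xs (S n)) (xs (S (S n)))). lra. }
  set (c := fun n => a n * / gamma n).
  assert (Hc0' : forall n, 0 <= c n) by (intros; unfold c; pose proof (Hig n); pose proof (Ha0 n); nra).
  assert (Hcdec : forall n, c (S n) <= c n).
  { intros n. pose proof (HP2 n (S n) (xs n) (xs (S n))) as H.
    change (T n (xs n)) with (xs (S n)) in H.
    change (T (S n) (xs (S n))) with (xs (S (S n))) in H.
    rewrite (m_zero d Hm) in H.
    pose proof (m_tri d Hm (xs n) (xs (S n)) (xs (S (S n)))) as Ht.
    pose proof (m_pos d Hm (xs n) (xs (S (S n)))).
    fold (a n) in H, Ht. change (d (xs (S n)) (xs (S (S n)))) with (a (S n)) in H, Ht.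
    unfold c. pose proof (Hig n) as i1. pose proof (Hig (S n)) as i2.
    pose proof (Ha0 n). pose proof (Ha0 (S n)).
    set (D := d (xs n) (xs (S (S n)))) in *.
    assert (HD : D ^ 2 <= (a n + a (S n)) ^ 2) by nra.
    assert (Hq2 : / gamma (S n) * (a (S n) ^ 2) <= / gamma n * (a n * a (S n))) by nra.
    destruct (Req_dec (a (S n)) 0) as [h0|h0].
    - rewrite h0. nra.
    - assert (0 < a (S n)) by lra. nra. }
  assert (Hcmono : forall n k, (n <= k)%nat -> c k <= c n).
  { intros n k Hnk. induction Hnk; [lra|]. pose proof (Hcdec m). lra. }
  assert (Hclim : forall e, 0 < e -> exists N, forall n, (N <= n)%nat -> c n <= e).
  { intros e he. destruct (classic (exists N, c N <= e)) as [[N HN]|Hn].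
    - exists N. intros n Hn. pose proof (Hcmono N n Hn). lra.
    - exfalso.
      assert (Hgt : forall n, e * gamma n <= a n).
      { intros n. destruct (Rle_or_lt (e * gamma n) (a n)) as [h|h]; auto. exfalso. apply Hn. exists n.
        unfold c. pose proof (Hg n). 
        apply Rmult_le_reg_r with (gamma n); auto. rewrite Rmult_assoc, Rinv_l; lra. }
      assert (Hs2 : forall n, e ^ 2 * sum_f_R0 (fun k => gamma k ^ 2) n <= sum_f_R0 (fun k => a k ^ 2) n).
      { intros n. induction n.
        - cbn [sum_f_R0]. pose proof (Hgt 0%nat). pose proof (Hg 0%nat).
          pose proof (sq_le (e * gamma 0%nat) (a 0%nat) ltac:(nra) ltac:(lra)). nra.
        - rewrite !tech5. pose proof (Hgt (S n)). pose proof (Hg (S n)).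
          pose proof (sq_le (e * gamma (S n)) (a (S n)) ltac:(nra) ltac:(lra)). nra. }
      destruct (Hinf (d x p0 ^ 2 * / e ^ 2)) as [N HN].
      specialize (HN N (le_n _)). specialize (Hs2 N). specialize (Hsum N).
      assert (e ^ 2 * (d x p0 ^ 2 * / e ^ 2) = d x p0 ^ 2) by (field; lra).
      assert (0 < e ^ 2) by nra.
      assert (e ^ 2 * (d x p0 ^ 2 * / e ^ 2) < e ^ 2 * sum_f_R0 (fun k => gamma k ^ 2) N)
        by (apply Rmult_lt_compat_l; auto).
      pose proof (pow2_ge_0 (d (xs (S N)) p0)). lra. }

  assert (HbxI : bounded_seq d xs) by exact (Hbx (fun k => k)).
  assert (Hkey : forall v m n, d (xs (S n)) (T m v) ^ 2 <=
      d v (xs (S n)) ^ 2 - d v (T m v) ^ 2 + gamma m * c n * (2 * (d (T m v) p0 + d p0 x))).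
  { intros v m n. pose proof (HP2 n m (xs n) v) as H.
    change (T n (xs n)) with (xs (S n)) in H.
    set (z := T m v) in *.
    set (P := d (xs n) z) in *. set (Q := d (xs (S n)) z) in *.
    change (d (xs n) (xs (S n))) with (a n) in H.
    assert (hPQ : P <= a n + Q) by (apply (m_tri d Hm)).
    assert (hP0 : 0 <= P) by apply (m_pos d Hm).
    assert (hQ0 : 0 <= Q) by apply (m_pos d Hm).
    assert (hP : P <= d p0 x + d z p0).
    { unfold P. pose proof (m_tri d Hm (xs n) p0 z). rewrite (m_sym d Hm (xs n) p0) in H0.
      pose proof (Hmono p0 Hp0 0%nat n ltac:(lia)). rewrite (m_sym d Hm p0 z) in H0. change (xs 0%nat) with x in H1. lra. }
    assert (hQ : Q <= d p0 x + d z p0).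
    { unfold Q. pose proof (m_tri d Hm (xs (S n)) p0 z). rewrite (m_sym d Hm (xs (S n)) p0) in H0.
      pose proof (Hmono p0 Hp0 0%nat (S n) ltac:(lia)). rewrite (m_sym d Hm p0 z) in H0. change (xs 0%nat) with x in H1. lra. }
    set (K := 2 * (d z p0 + d p0 x)).
    assert (h1 : P ^ 2 - a n ^ 2 - Q ^ 2 <= a n * K).
    { pose proof (Ha0 n). unfold K. nra. }
    assert (h2 : / gamma n * (P ^ 2 - a n ^ 2 - Q ^ 2) <= c n * K).
    { unfold c. pose proof (Hig n). 
      apply Rle_trans with (/ gamma n * (a n * K)). apply Rmult_le_compat_l; lra. lra. }
    set (L := Q ^ 2 + d v z ^ 2 - d v (xs (S n)) ^ 2) in *.
    assert (h3 : / gamma m * L <= c n * K) by lra.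
    pose proof (Hg m) as hg.
    assert (h4 : gamma m * (/ gamma m * L) <= gamma m * (c n * K)) by (apply Rmult_le_compat_l; lra).
    replace (gamma m * (/ gamma m * L)) with L in h4 by (field; lra).
    unfold L in h4. lra. }
  assert (HcF : forall phi : nat -> nat, (forall k, (k <= phi k)%nat) -> forall v,
     (forall y, rad d (fun k => xs (phi k)) v <= rad d (fun k => xs (phi k)) y) -> forall m, T m v = v).
  { intros phi Hphi v Hv m.
    set (u := fun k => xs (phi k)) in *.
    assert (Hbu : bounded_seq d u) by apply Hbx.
    set (K := 2 * (d (T m v) p0 + d p0 x)).
    assert (HK : 0 <= K) by (unfold K; pose proof (m_pos d Hm (T m v) p0); pose proof (m_pos d Hm p0 x); lra).
    pose proof (Hg m) as hg.
    assert (H := lin_cmp (fun k => d (T m v) (u k) ^ 2) (fun k => d v (u k) ^ 2) (fun k => d v (u k) ^ 2)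
      _ _ _ 1 0 (- d v (T m v) ^ 2) (rad_sq d u (T m v) Hm Hbu) (rad_sq d u v Hm Hbu) (rad_sq d u v Hm Hbu)
      ltac:(lra) ltac:(lra)).
    assert (Hev : forall e, 0 < e -> exists N, forall k, (N <= k)%nat ->
       d (T m v) (u k) ^ 2 <= 1 * d v (u k) ^ 2 + 0 * d v (u k) ^ 2 + - d v (T m v) ^ 2 + e).
    { intros e he.
      assert (he' : 0 < e / (gamma m * K + 1)) by (apply Rdiv_lt_0_compat; nra).
      destruct (Hclim _ he') as [N HN]. exists (S N). intros k hk.
      unfold u. specialize (Hphi k).
      destruct (phi k) as [|n] eqn:Hpk; [lia|].
      pose proof (Hkey v m n) as Hk. fold K in Hk.
      rewrite (m_sym d Hm (T m v) (xs (S n))).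
      specialize (HN n ltac:(lia)). pose proof (Hc0' n).
      assert (gamma m * K * c n <= gamma m * K * (e / (gamma m * K + 1))) by (apply Rmult_le_compat_l; nra).
      assert (gamma m * K * (e / (gamma m * K + 1)) <= e).
      { apply Rmult_le_reg_r with (gamma m * K + 1). nra.
        unfold Rdiv. rewrite Rmult_assoc, (Rmult_assoc e), Rinv_l by nra. nra. }
      nra. }
    specialize (H Hev).
    pose proof (Hv (T m v)) as Hvz.
    pose proof (rad_nonneg d u v Hm Hbu).
    pose proof (sq_le _ _ H0 Hvz).
    assert (d v (T m v) = 0).
    { pose proof (m_pos d Hm v (T m v)). nra. }
    symmetry. apply (m_eq d Hm). exact H2. }
  assert (Hsub : forall q, (forall n, T n q = q) -> forall phi : nat -> nat, (forall k, (k <= phi k)%nat) ->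
     rad d (fun k => xs (phi k)) q = rad d xs q).
  { intros q Hq phi Hphi. apply rad_eq.
    pose proof (rad_is d xs q Hm HbxI) as Hl. set (l := rad d xs q) in *.
    assert (Hlow : forall n, l <= d q (xs n)).
    { intros n. apply le_eps. intros e he. destruct (LS_fr _ _ e Hl he n) as [n' [hn' hlt]].
      pose proof (Hmono q Hq n n' hn'). lra. }
    intros [e he]; simpl. split.
    - intros N. exists N. split; auto. pose proof (Hlow (phi N)). lra.
    - destruct (LS_ev _ _ e Hl he) as [N HN]. exists N. intros k hk. apply HN.
      pose proof (Hphi k). lia. }
  destruct (center_ex d xs Hc HbxI) as [p Hp].
  assert (pF : forall n, T n p = p) by exact (HcF (fun k => k) (fun k => le_n k) p Hp).
  exists p. split; auto. split; [exact HbxI|].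
  intros phi Hphi.
  assert (Hphik : forall k, (k <= phi k)%nat).
  { induction k; [lia|]. specialize (Hphi k). lia. }
  change (fun n => orbit T x (phi n)) with (fun n => xs (phi n)).
  assert (Hbu := Hbx phi).
  destruct (center_ex d _ Hc Hbu) as [v Hv].
  pose proof (HcF phi Hphik v Hv) as vF.
  split.
  - apply (iac_iff d _ p Hm Hbu). intros y.
    rewrite (Hsub p pF phi Hphik).
    specialize (Hp v). rewrite <- (Hsub v vF phi Hphik) in Hp. specialize (Hv y). lra.
  - intros y Hy0. pose proof (proj1 (iac_iff d _ y Hm Hbu) Hy0) as Hy.
    pose proof (HcF phi Hphik y Hy) as yF.
    apply (center_uniq d xs y p Hc HbxI); auto.
    intros y'. rewrite <- (Hsub y yF phi Hphik). specialize (Hy p).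
    rewrite (Hsub p pF phi Hphik) in Hy. specialize (Hp y'). lra.
Qed.
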